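(* Let $p\geq 1$. For any $y^1,y^2\in D(\mathbb{R}^+,\mathbb{R})$ and any $T\in\mathbb{R}^+$, \[ v_p\Big(\sup_{s\leq\cdot}y^1_s-\sup_{s\leq\cdot}y^2_s\Big)_T\leq v_p(y^1-y^2)_T . \]
   Context: $\mathbb{R}^+=[0,\infty)$. $D(\mathbb{R}^+,\mathbb{R}^m)$ denotes the space of càdlàg functions $x:\mathbb{R}^+\to\mathbb{R}^m$ (right-continuous with left limits). For $x\in D(\mathbb{R}^+,\mathbb{R}^m)$ and $a<b$, $v_p(x)_{[a,b]}=\sup_\pi\sum_{i=1}^n|x_{t_i}-x_{t_{i-1}}|^p$, the supremum being over all subdivisions $\pi=\{a=t_0<\dots<t_n=b\}$, with $|\cdot|$ the Euclidean norm; $v_p(x)_T=v_p(x)_{[0,T]}$. The function $\sup_{s\leq\cdot}y_s$ is $t\mapsto\sup_{s\leq t}y_s$. *)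

(* Defs.v *)
From HB Require Import structures.
From mathcomp Require Import all_boot all_order all_algebra.
From mathcomp Require Import all_classical all_reals all_analysis.
Set Implicit Arguments. Unset Strict Implicit. Unset Printing Implicit Defensive.
Import Order.TTheory GRing.Theory Num.Theory.
Import numFieldNormedType.Exports.
Local Open Scope classical_set_scope.
Local Open Scope ring_scope.

(* Càdlàg on R^+ = [0,oo): functions R -> R whose values at negative
   times are irrelevant; right-continuous at every t >= 0 and having a
   (finite) left limit at every t > 0. *)
Definition cadlag (R : realType) (x : R -> R) : Prop :=
  (forall t : R, 0 <= t -> x x0 @[x0 --> t^'+] --> x t) /\
  (forall t : R, 0 < t -> cvg (x x0 @[x0 --> t^'-])).

Definition subdivision (R : realType) (a b : R) (n : nat) (t : nat -> R) : Prop :=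
  t 0%N = a /\ t n = b /\ (forall i : nat, (i < n)%N -> t i < t i.+1).

Definition pvar (R : realType) (p : R) (x : R -> R) (a b : R) : \bar R :=
  ereal_sup [set e | exists (n : nat) (t : nat -> R),
     subdivision a b n t /\
     e = (\sum_(i < n) `|x (t i.+1) - x (t i)| `^ p)%:E]%classic.

Definition pvarT (R : realType) (p : R) (x : R -> R) (T : R) : \bar R :=
  pvar p x 0 T.

Definition runsup (R : realType) (y : R -> R) : R -> R :=
  fun t => sup [set y s | s in `[0, t]%classic].

(* Main.v *)
Require Import Defs.
From HB Require Import structures.
From mathcomp Require Import all_boot all_order all_algebra.
From mathcomp Require Import all_classical all_reals all_analysis.
From mathcomp Require Import ring lra.
Import Order.TTheory GRing.Theory Num.Theory.
Import numFieldNormedType.Exports.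
Local Open Scope classical_set_scope.
Local Open Scope ring_scope.

Lemma right_bnd (R : realType) (y : R -> R) t l :
  y x @[x --> t^'+] --> l -> exists2 d : R, 0 < d & forall x, t < x < t + d -> y x <= l + 1.
Proof.
move/cvgrPdist_lt => /(_ 1 ltr01) [d /= d0 H].
exists d => // x /andP[tx xd].
have : `|t - x| < d -> t < x -> `|l - y x| < 1 by apply: H.
have hx : `|t - x| < d by rewrite distrC ger0_norm ?subr_ge0 ?ltW //; lra.
move=> /(_ hx tx).
rewrite ltr_norml => /andP[h1 h2]; lra.
Qed.

Lemma left_bnd (R : realType) (y : R -> R) t l :
  y x @[x --> t^'-] --> l -> exists2 d : R, 0 < d & forall x, t - d < x < t -> y x <= l + 1.
Proof.
move/cvgrPdist_lt => /(_ 1 ltr01) [d /= d0 H].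
exists d => // x /andP[tx xd].
have : `|t - x| < d -> x < t -> `|l - y x| < 1 by apply: H.
have hx : `|t - x| < d by rewrite ger0_norm ?subr_ge0 ?ltW //; lra.
move=> /(_ hx xd).
rewrite ltr_norml => /andP[h1 h2]; lra.
Qed.

Lemma cadlag_bnd (R : realType) (y : R -> R) : cadlag y ->
  forall t, 0 <= t -> exists B, forall s, 0 <= s <= t -> y s <= B.
Proof.
move=> [hr hl] t t0.
pose S := [set s | 0 <= s <= t /\ exists B, forall u, 0 <= u <= s -> y u <= B]%classic.
have S0 : S 0.
  split; first by rewrite lexx t0.
  by exists (y 0) => u /andP[u0 u1]; have -> : u = 0 by apply/le_anti; rewrite u0 u1.
have hS : has_sup S.
  split; first by exists 0.
  by exists t => s [/andP[_ ]].
set sg := sup S.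
have sg0 : 0 <= sg by apply: sup_upper_bound.
have sgt : sg <= t by apply: ge_sup; [exists 0 | move=> s [/andP[_]]].
have [B HB] : exists B, forall u, 0 <= u <= sg -> y u <= B.
  have [sg00|sgp] := eqVneq sg 0.
    exists (y 0) => u /andP[u0 u1].
    by have -> : u = 0 by apply/le_anti; rewrite u0 -sg00 u1.
  have sgp' : 0 < sg by rewrite lt_neqAle eq_sym sgp sg0.
  have [d d0 Hd] := @left_bnd _ _ _ _ (hl _ sgp').
  have [s Ss ss] := sup_adherent d0 hS.
  case: Ss => [/andP[s0 st] [Bs HBs]].
  exists (Num.max Bs (Num.max (lim (y x @[x --> sg^'-]) + 1) (y sg))) => u /andP[u0 u1].
  rewrite !le_max.
  have [us|us] := leP u s; first by rewrite HBs // u0 us.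
  have [ug|ug] := ltP u sg.
    by rewrite Hd ?orbT // ug andbT; apply: lt_trans us; rewrite -/sg in ss.
  have -> : u = sg by apply/le_anti; rewrite u1 ug.
  by rewrite lexx !orbT.
exists B => s /andP[s0 st].
have [sgt'|] := ltP sg t; last first.
  by move=> ts; rewrite HB // s0 (le_trans st ts).
exfalso.
have [d d0 Hd] := @right_bnd _ _ _ _ (hr _ sg0).
pose s' := Num.min (sg + d / 2) t.
have Ss' : S s'.
  split.
    rewrite le_min ge_min lexx orbT andbT; apply/andP; split; [lra|done].
  exists (Num.max B (y sg + 1)) => u /andP[u0 u1].
  rewrite le_max.
  have [ug|ug] := leP u sg; first by rewrite HB // u0 ug.
  rewrite Hd ?orbT // ug /=.
  apply: (le_lt_trans u1); rewrite /s' gt_min; apply/orP; left; lra.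
have : s' <= sg by apply: sup_upper_bound.
rewrite /s' ge_min => /orP[]; lra.
Qed.

Section RS.
Variables (R : realType) (y : R -> R) (hy : cadlag y).

Lemma hs_E t : 0 <= t -> has_sup [set y s | s in `[0, t]%classic].
Proof.
move=> t0; have [B HB] := @cadlag_bnd _ _ hy _ t0.
split; first by exists (y 0), 0 => //=; rewrite in_itv /= lexx t0.
exists B => _ [s /= hs <-]; apply: HB; by move: hs; rewrite in_itv /=.
Qed.

Lemma runsup_ub t s : 0 <= s <= t -> y s <= runsup y t.
Proof.
move=> /andP[s0 st]; apply: sup_upper_bound; first exact: (@hs_E _ (le_trans s0 st)).
by exists s => //=; rewrite in_itv /= s0 st.
Qed.

Lemma runsup_adh t e : 0 <= t -> 0 < e -> exists s, 0 <= s <= t /\ runsup y t - e < y s.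
Proof.
move=> t0 e0; have [_ [s hs <-] H] := sup_adherent e0 (@hs_E _ t0).
by exists s; split => //; move: hs; rewrite /= in_itv /=.
Qed.

Lemma runsup0 : runsup y 0 = y 0.
Proof.
rewrite /runsup; have -> : [set y s | s in `[0, 0]%classic] = [set y 0].
  apply/seteqP; split => [_ [s /= hs <-]|_ ->].
    move: hs; rewrite in_itv /= => /andP[h1 h2].
    by have -> : s = 0 by apply/le_anti; rewrite h1 h2.
  by exists 0 => //=; rewrite in_itv /= lexx.
exact: sup1.
Qed.

Lemma runsup_mono s t : 0 <= s -> s <= t -> runsup y s <= runsup y t.
Proof.
move=> s0 st; apply: ge_sup; first by exists (y 0), 0 => //=; rewrite in_itv /= lexx s0.
move=> _ [u /= hu <-]; apply: runsup_ub; move: hu; rewrite in_itv /= => /andP[-> /le_trans ->] //.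
Qed.

Lemma runsup_strict s t e : 0 <= s -> s <= t -> 0 < e -> runsup y s < runsup y t ->
  exists u, s < u <= t /\ runsup y t - e < y u.
Proof.
move=> s0 st e0 lt.
have e'0 : 0 < Num.min e (runsup y t - runsup y s) by rewrite lt_min e0 subr_gt0.
have [u [/andP[u0 ut] hu]] := @runsup_adh _ _ (le_trans s0 st) e'0.
exists u; split; last first.
  apply: le_lt_trans hu; have : Num.min e (runsup y t - runsup y s) <= e by rewrite ge_min lexx.
  lra.
rewrite ut andbT ltNge; apply/negP => us.
have := @runsup_ub s u; rewrite u0 us => /(_ isT) h.
have hm : Num.min e (runsup y t - runsup y s) <= runsup y t - runsup y s by rewrite ge_min lexx orbT.
lra.
Qed.
End RS.

Section PowR.
Variables (R : realType) (p : R) (hp : 1 <= p).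

Lemma p_neq0 : p != 0. Proof. apply/negP => /eqP p0; move: hp; rewrite p0; lra. Qed.

Lemma pw0 : 0 `^ p = 0 :> R. Proof. exact: powR0 p_neq0. Qed.

Lemma pw_le (x y : R) : 0 <= x -> x <= y -> x `^ p <= y `^ p.
Proof.
move=> x0 xy; apply: ge0_ler_powR; rewrite ?nnegrE //; [exact: le_trans ler01 hp | exact: le_trans x0 xy].
Qed.

Lemma pw_scale (u S : R) : 0 <= u <= 1 -> 0 <= S -> (u * S) `^ p <= u * S `^ p.
Proof.
move=> /andP[u0 u1] S0; have [->|un0] := eqVneq u 0; first by rewrite !mul0r pw0.
apply: ge1r_powRZ => //; rewrite u1 andbT lt_neqAle eq_sym un0 u0 //.
Qed.

Lemma pw_superadd (x y : R) : 0 <= x -> 0 <= y -> x `^ p + y `^ p <= (x + y) `^ p.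
Proof.
move=> x0 y0; have [S0|Sn0] := eqVneq (x + y) 0.
  have x00 : x = 0 by lra. have y00 : y = 0 by lra.
  by rewrite x00 y00 addr0 pw0 addr0.
have Sp : 0 < x + y by rewrite lt_neqAle eq_sym Sn0 /=; lra.
have hx : x = (x / (x + y)) * (x + y) by rewrite divfK.
have hy : y = (y / (x + y)) * (x + y) by rewrite divfK.
have ux : 0 <= x / (x + y) <= 1.
  by rewrite divr_ge0 ?ler_pdivrMr ?mul1r //=; lra.
have uy : 0 <= y / (x + y) <= 1.
  by rewrite divr_ge0 ?ler_pdivrMr ?mul1r //=; lra.
have h1 := @pw_scale _ _ ux (ltW Sp); rewrite -hx in h1.
have h2 := @pw_scale _ _ uy (ltW Sp); rewrite -hy in h2.
apply: le_trans (lerD h1 h2) _.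
by rewrite -mulrDl -mulrDl divff // mul1r.
Qed.

Lemma pw_mul (c h : R) : 0 <= c -> 0 <= h -> (c * h) `^ p = c `^ p * h `^ p.
Proof. by move=> c0 h0; rewrite powRM. Qed.
End PowR.
Arguments p_neq0 {R p}.
Arguments pw0 {R p}.
Arguments pw_le {R p} hp {x y}.
Arguments pw_scale {R p} hp {u S}.
Arguments pw_superadd {R p} hp {x y}.
Arguments pw_mul {R p c h}.

Section Chain.
Variables (R : realType) (p c eps : R) (hp : 1 <= p) (c0 : 0 <= c) (c1 : c <= 1)
  (z e : nat -> R) (N : nat).
Hypothesis Hstep : forall j, (j < N)%N -> z j.+1 != z j -> 2 * eps <= (1 - c) * `|z j.+1 - z j|.
Hypothesis H0 : `|e 0%N - z 0%N| <= eps.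
Hypothesis Hup : forall j, (j < N)%N -> z j < z j.+1 -> z j.+1 - e j.+1 <= eps.
Hypothesis Hdn : forall j, (j < N)%N -> z j.+1 < z j -> e j.+1 - z j.+1 <= eps.

Definition SD r (k : nat -> nat) := \sum_(i < r) `|e (k i.+1) - e (k i)| `^ p.
Definition SZ n := \sum_(j < n) `|z j.+1 - z j| `^ p.
Definition extk r (k : nat -> nat) b := fun i => if (i <= r)%N then k i else b.

Lemma SD_ext r k b : SD r.+1 (extk r k b) = SD r k + `|e b - e (k r)| `^ p.
Proof.
rewrite /SD big_ord_recr /=; congr (_ + _).
  by apply: eq_bigr => i _; rewrite /extk ltn_ord (ltnW (ltn_ord i)).
by rewrite /extk ltnn leqnn.
Qed.

Lemma SZS n : SZ n.+1 = SZ n + `|z n.+1 - z n| `^ p.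
Proof. by rewrite /SZ big_ord_recr. Qed.

Lemma sgn_norm (s x : R) : s = 1 \/ s = -1 -> 0 <= s * x -> `|x| = s * x.
Proof.
case=> -> h; first by rewrite mul1r ger0_norm // -(mul1r x).
by rewrite mulN1r ler0_norm //; move: h; rewrite mulN1r; lra.
Qed.

Lemma sgn_le_norm (s x : R) : s = 1 \/ s = -1 -> s * x <= `|x|.
Proof. by case=> ->; rewrite ?mul1r ?mulN1r ?ler_norm // -normrN ler_norm. Qed.

Lemma key (s za zb ea eb : R) : s = 1 \/ s = -1 ->
  s * (ea - za) <= eps -> s * (zb - eb) <= eps -> 2 * eps <= (1 - c) * (s * (zb - za)) ->
  0 <= s * (zb - za) ->
  c `^ p * (s * (zb - za)) `^ p <= `|eb - ea| `^ p.
Proof.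
move=> hs h1 h2 h3 h4.
rewrite -pw_mul //.
apply: (pw_le hp) => //; first exact: mulr_ge0.
apply: (le_trans _ (@sgn_le_norm s (eb - ea) hs)).
by case: hs => hs; rewrite hs in h1 h2 h3 h4 *; nra.
Qed.

Definition inv n := exists r k a b (s : R),
  [/\ k 0%N = 0%N, (forall i, (i < r)%N -> (k i < k i.+1)%N), k r = a, (a <= b <= n)%N
    & s = 1 \/ s = -1] /\
  [/\ z b = z n, s * (e a - z a) <= eps, (b = a -> `|e a - z a| <= eps),
    (b != a -> s * (z b - e b) <= eps /\ 2 * eps <= (1 - c) * (s * (z b - z a)))
    & 0 <= s * (z b - z a)] /\
  c `^ p * SZ n <= SD r k + c `^ p * (s * (z b - z a)) `^ p.

Lemma inv0 : inv 0.
Proof.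
exists 0%N, (fun _ => 0%N), 0%N, 0%N, 1; split; first by split => //; left.
split.
  split => //; rewrite ?subrr ?mulr0 //.
  by apply: le_trans H0; rewrite mul1r ler_norm.
by rewrite /SZ /SD !big_ord0 subrr !mulr0 (pw0 hp) mulr0 addr0.
Qed.

Lemma dir_good n s : (n < N)%N -> s = 1 \/ s = -1 -> 0 < s * (z n.+1 - z n) ->
  s * (z n.+1 - e n.+1) <= eps.
Proof.
move=> nN; case=> -> h.
  rewrite mul1r in h; rewrite mul1r; have hlt : z n < z n.+1 by lra.
  exact: (Hup _ nN hlt).
rewrite mulN1r in h; rewrite mulN1r; have hlt : z n.+1 < z n by lra.
have := Hdn _ nN hlt; lra.
Qed.

Lemma extk_props r k a b : k 0%N = 0%N -> (forall i, (i < r)%N -> (k i < k i.+1)%N) ->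
  k r = a -> (a < b)%N ->
  [/\ extk r k b 0%N = 0%N, (forall i, (i < r.+1)%N -> (extk r k b i < extk r k b i.+1)%N)
    & extk r k b r.+1 = b].
Proof.
move=> k0 kinc kr ab; split.
- by rewrite /extk leq0n.
- move=> i; rewrite ltnS leq_eqVlt => /orP[/eqP ->|ir].
    by rewrite /extk leqnn ltnn kr.
  by rewrite /extk ir (ltnW ir) kinc.
- by rewrite /extk ltnn.
Qed.

Lemma inv_step n : (n < N)%N -> inv n -> inv n.+1.
Proof.
move=> nN [r [k [a [b [s [[k0 kinc kr abn hs] [[zb anc hba hbna hh] sum]]]]]]].
move: abn => /andP[ab bn].
have Cge : 0 <= c `^ p := powR_ge0 _ _.
have an : (a <= n)%N := leq_trans ab bn.
have nSa : n.+1 = a -> False by move=> na; move: an; rewrite -na ltnn.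
have [E|NE] := eqVneq (z n.+1) (z n).
  exists r, k, a, b, s; split; first by split => //; rewrite ab (leq_trans bn).
  split; first by split => //; rewrite zb E.
  by rewrite SZS E subrr normr0 (pw0 hp) addr0.
have dstep := Hstep _ nN NE.
have [pos|neg] := ltP 0 (s * (z n.+1 - z n)).
  have dn := @sgn_norm _ _ hs (ltW pos).
  have good := @dir_good _ _ nN hs pos.
  exists r, k, a, n.+1, s; split; first by split => //; rewrite (leq_trans an) ?leqnn.
  have eh : s * (z n.+1 - z a) = s * (z b - z a) + s * (z n.+1 - z n).
    by rewrite -mulrDr zb; congr (_ * _); lra.
  split.
    split => //.
      move=> _; split => //; rewrite eh mulrDr; rewrite dn in dstep.
      have : 0 <= (1 - c) * (s * (z b - z a)) by apply: mulr_ge0 => //; rewrite subr_ge0.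
      lra.
    by rewrite eh; lra.
  rewrite SZS eh dn.
  have sa := pw_superadd hp hh (ltW pos).
  have := ler_wpM2l Cge sa.
  lra.
have s0 : s != 0 by case: hs => ->; rewrite ?oppr_eq0 oner_eq0.
have neg' : s * (z n.+1 - z n) < 0.
  by rewrite lt_neqAle neg andbT mulf_eq0 negb_or subr_eq0 NE s0.
have hs' : - s = 1 \/ - s = -1 by case: hs => ->; [right|left; rewrite opprK].
have pos' : 0 < - s * (z n.+1 - z n) by rewrite mulNr oppr_gt0.
have dn := @sgn_norm _ _ hs' (ltW pos').
have good := @dir_good _ _ nN hs' pos'.
have [ba|bna] := eqVneq b a.
  have za : z a = z n by rewrite -ba.
  exists r, k, a, n.+1, (- s); split; first by split => //; rewrite (leq_trans an) ?leqnn.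
  split.
    split => //.
    - exact: le_trans (@sgn_le_norm _ _ hs') (hba ba).
    - by move=> _; split => //; rewrite za -dn.
    - by rewrite za ltW.
  rewrite SZS za -dn.
  move: sum; rewrite ba subrr mulr0 (pw0 hp) mulr0 addr0.
  rewrite dn; lra.
have abS : (a < b)%N by rewrite ltn_neqAle ab andbT eq_sym.
have [e0 einc er] := @extk_props _ _ _ _ k0 kinc kr abS.
have [g1 g2] := hbna bna.
exists r.+1, (extk r k b), b, n.+1, (- s); split.
  split => //; rewrite leqnn andbT; exact: leq_trans bn (leqnSn n).
split.
  split => //.
  - by rewrite mulNr -mulrN opprB.
  - by move=> nb; move: bn; rewrite -nb ltnn.
  - by move=> _; split => //; rewrite zb -dn.
  - by rewrite zb ltW.
rewrite SZS SD_ext kr zb.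
have kk := @key _ _ _ _ _ hs anc g1 g2 hh.
rewrite dn; lra.
Qed.

Lemma invN n : (n <= N)%N -> inv n.
Proof.
elim: n => [_|n IH nN]; first exact: inv0.
by apply: inv_step => //; apply: IH; apply: ltnW.
Qed.

Lemma chain_final : exists r k, [/\ k 0%N = 0%N, (forall i, (i < r)%N -> (k i < k i.+1)%N),
  (k r <= N)%N & c `^ p * SZ N <= SD r k].
Proof.
have [r [k [a [b [s [[k0 kinc kr abn hs] [[zb anc hba hbna hh] sum]]]]]]] := @invN _ (leqnn N).
move: abn => /andP[ab bn].
have [ba|bna] := eqVneq b a.
  exists r, k; split => //; first by rewrite kr -ba.
  by move: sum; rewrite ba subrr mulr0 (pw0 hp) mulr0 addr0.
have abS : (a < b)%N by rewrite ltn_neqAle ab andbT eq_sym.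
have [e0 einc er] := @extk_props _ _ _ _ k0 kinc kr abS.
have [g1 g2] := hbna bna.
exists r.+1, (extk r k b); split => //; first by rewrite er.
rewrite SD_ext kr.
have kk := @key _ _ _ _ _ hs anc g1 g2 hh.
lra.
Qed.
End Chain.

Lemma sub_mono (R : realType) a b n (t : nat -> R) : subdivision a b n t ->
  forall i j, (i <= j)%N -> (j <= n)%N -> t i <= t j.
Proof.
move=> [_ [_ tinc]] i; elim=> [|j IH] ij jn.
  by move: ij; rewrite leqn0 => /eqP ->.
move: ij; rewrite leq_eqVlt => /orP[/eqP -> //|]; rewrite ltnS => ij.
exact: le_trans (IH ij (ltnW jn)) (ltW (tinc _ jn)).
Qed.

Lemma nat_mono r (k : nat -> nat) : (forall i, (i < r)%N -> (k i < k i.+1)%N) ->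
  forall i j, (i <= j)%N -> (j <= r)%N -> (k i <= k j)%N.
Proof.
move=> kinc i; elim=> [|j IH] ij jr.
  by move: ij; rewrite leqn0 => /eqP ->.
move: ij; rewrite leq_eqVlt => /orP[/eqP -> //|]; rewrite ltnS => ij.
exact: leq_trans (IH ij (ltnW jr)) (ltnW (kinc _ jr)).
Qed.

Lemma exists_m (R : realType) n (f : nat -> R) :
  exists2 m : R, 0 < m & forall j, (j < n)%N -> f j != 0 -> m <= `|f j|.
Proof.
elim: n => [|n [m m0 Hm]]; first by exists 1.
have [f0|fn0] := eqVneq (f n) 0.
  exists m => // j; rewrite ltnS leq_eqVlt => /orP[/eqP ->|jn]; first by rewrite f0 eqxx.
  exact: Hm.
exists (Num.min m `|f n|); first by rewrite lt_min m0 normr_gt0.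
move=> j; rewrite ltnS leq_eqVlt => /orP[/eqP ->|jn] fj; first by rewrite ge_min lexx orbT.
by rewrite ge_min Hm.
Qed.

Arguments sub_mono {R a b n t}.
Arguments nat_mono {r k}.
Arguments runsup_mono {R y} hy {s t}.
Arguments runsup_strict {R y} hy {s t e}.
Arguments runsup_ub {R y} hy {t s}.
Arguments runsup0 {R y}.

Theorem theorem1 (R : realType) (p : R) (hp : 1 <= p)
  (y1 y2 : R -> R) (hy1 : cadlag y1) (hy2 : cadlag y2) (T : R) (hT : 0 <= T) :
  (pvarT p (fun t => (runsup y1 t - runsup y2 t)%R) T <= pvarT p (fun t => (y1 t - y2 t)%R) T)%E.
Proof.
pose Z := fun t => runsup y1 t - runsup y2 t.
pose D := fun t => y1 t - y2 t.
rewrite /pvarT /pvar.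
apply: ge_ereal_sup => _ [n [t [sub ->]]].
have S0 : 0 <= \sum_(i < n) `|Z (t i.+1) - Z (t i)| `^ p.
  by apply: sumr_ge0 => i _; apply: powR_ge0.
apply/lee_mul01Pr; first by rewrite lee_fin.
move=> lam /andP[l0 l1].
rewrite -EFinM.
have p0 : 0 < p by apply: lt_le_trans hp.
pose c := lam `^ (p^-1).
have cp : c `^ p = lam.
  by rewrite /c -powRrM mulVf ?powRr1 ?(ltW l0) // gt_eqF.
have c0 : 0 <= c := powR_ge0 _ _.
have c1 : c < 1.
  have pi0 : 0 < p^-1 by rewrite invr_gt0.
  have := @gt0_ltr_powR _ (p^-1) pi0 lam 1.
  rewrite !nnegrE powR1 => /(_ (ltW l0) ler01 l1) //.
have [m m0 Hm] := @exists_m _ n (fun j => Z (t j.+1) - Z (t j)).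
pose eps := (1 - c) / 2 * m.
have eps0 : 0 < eps by rewrite /eps mulr_gt0 // divr_gt0 // subr_gt0.
have tmono := sub_mono sub.
have [t0 [tn tinc]] := sub.
have tge0 : forall j, (j <= n)%N -> 0 <= t j.
  by move=> j jn; rewrite -t0; apply: tmono.
have tleT : forall j, (j <= n)%N -> t j <= T.
  by move=> j jn; rewrite -tn; apply: tmono.
have Hq : forall j, exists q : R, (j = 0%N -> q = 0) /\ ((0 < j <= n)%N ->
   [/\ t j.-1 < q, q <= t j, (Z (t j.-1) < Z (t j) -> Z (t j) - D q <= eps)
     & (Z (t j) < Z (t j.-1) -> D q - Z (t j) <= eps)]).
  case=> [|j]; first by exists 0; split => // /andP[].
  have [jn|nj] := leqP j.+1 n; last first.
    by exists 0; split => // /andP[_]; rewrite leqNgt nj.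
  rewrite /=.
  have tj : t j < t j.+1 by apply: tinc.
  have tj0 : 0 <= t j := tge0 j (ltnW jn).
  have [up|nup] := ltP (Z (t j)) (Z (t j.+1)).
    have M1lt : runsup y1 (t j) < runsup y1 (t j.+1).
      have := runsup_mono hy2 tj0 (ltW tj); rewrite /Z in up; lra.
    have [u [/andP[u1 u2] hu]] := runsup_strict hy1 tj0 (ltW tj) eps0 M1lt.
    have u0 : 0 <= u by apply: le_trans tj0 (ltW u1).
    have := @runsup_ub _ _ hy2 (t j.+1) u; rewrite u0 u2 => /(_ isT) h2.
    exists u; split => // _; split => //; first by move=> _; rewrite /Z /D; lra.
    by move=> h; lra.
  have [dn|ndn] := ltP (Z (t j.+1)) (Z (t j)).
    have M2lt : runsup y2 (t j) < runsup y2 (t j.+1).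
      have := runsup_mono hy1 tj0 (ltW tj); rewrite /Z in dn; lra.
    have [u [/andP[u1 u2] hu]] := runsup_strict hy2 tj0 (ltW tj) eps0 M2lt.
    have u0 : 0 <= u by apply: le_trans tj0 (ltW u1).
    have := @runsup_ub _ _ hy1 (t j.+1) u; rewrite u0 u2 => /(_ isT) h1.
    exists u; split => // _; split => //.
    by move=> _; rewrite /Z /D; lra.
  by exists (t j.+1); split => // _; split => //.
have [q Pq] := choice Hq.
have q0 : q 0%N = 0 by apply: (Pq 0%N).1.
have Z0 : Z (t 0%N) = D 0 by rewrite t0 /Z /D !runsup0.
have := @chain_final R p c eps hp c0 (ltW c1) (fun j => Z (t j)) (fun j => D (q j)) n.
case.
- move=> j jn NE.
  have := Hm j jn; rewrite subr_eq0 => /(_ NE) hm.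
  have -> : 2 * eps = (1 - c) * m by rewrite /eps; field.
  by apply: ler_wpM2l => //; rewrite subr_ge0 ltW.
- by rewrite q0 -Z0 subrr normr0 ltW.
- move=> j jn h.
  have [_ _ hh _] := (Pq j.+1).2 jn.
  exact: hh h.
- move=> j jn h.
  have [_ _ _ hh] := (Pq j.+1).2 jn.
  exact: hh h.
move=> r [k [k0 kinc krn Hsum]].
rewrite cp in Hsum.
have qle : forall j, (j <= n)%N -> q j <= t j.
  case=> [|j] jn; first by rewrite q0 t0.
  by have [_ hh _ _] := (Pq j.+1).2 jn.
have qlt : forall i j, (i < j)%N -> (j <= n)%N -> q i < q j.
  move=> i [|j] // ij jn.
  have [hh _ _ _] := (Pq j.+1).2 jn.
  apply: (le_lt_trans _ hh); apply: (le_trans (qle i (ltnW (leq_trans ij jn)))).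
  by apply: tmono; [rewrite -ltnS | apply: ltnW].
have kmono := nat_mono kinc.
have qk : forall i, (i < r)%N -> q (k i) < q (k i.+1).
  move=> i ir; apply: qlt; first exact: kinc.
  exact: leq_trans (kmono _ _ ir (leqnn r)) krn.
have qkrT : q (k r) <= T := le_trans (qle _ krn) (tleT _ krn).
apply: (@le_trans _ _ (SD R p (fun j => D (q j)) r k)%:E); first by rewrite lee_fin.
move: qkrT; rewrite le_eqVlt => /orP[/eqP qT|qT].
  apply: ereal_sup_ubound; exists r, (fun i => q (k i)); split => //.
  by split; [rewrite k0 q0 | split].
pose t' := fun i => if (i <= r)%N then q (k i) else T.
apply: (@le_trans _ _ (\sum_(i < r.+1) `|D (t' i.+1) - D (t' i)| `^ p)%:E); last first.
  apply: ereal_sup_ubound; exists r.+1, t'; split => //.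
  split; first by rewrite /t' leq0n k0 q0.
  split; first by rewrite /t' ltnn.
  move=> i; rewrite ltnS leq_eqVlt => /orP[/eqP ->|ir].
    by rewrite /t' ltnn leqnn.
  by rewrite /t' ir (ltnW ir) qk.
rewrite lee_fin big_ord_recr /=.
rewrite /SD.
have -> : \sum_(i < r) `|D (t' i.+1) - D (t' i)| `^ p =
          \sum_(i < r) `|D (q (k i.+1)) - D (q (k i))| `^ p.
  by apply: eq_bigr => i _; rewrite /t' ltn_ord (ltnW (ltn_ord i)).
by rewrite lerDl powR_ge0.
Qed.
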